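(* Let $S$ be a numerical semigroup with minimal generators $e<a_1<\dots<a_t$. For every $s\in S$, ${\rm d}_{\max}(s;S)$ equals the number of $B^{\mathcal D}$-factorizations of ${\rm adj}(s)$ of length at most ${\rm ord}(s;S)$.
   Context: A numerical semigroup is a submonoid of $(\mathbb N,+)$ with finite complement. An $S$-factorization of $n$ is $(c_0,\dots,c_t)\in\mathbb N^{t+1}$ with $c_0e+\sum c_ia_i=n$, of length $\sum c_i$. ${\rm ord}(n;S)$ is the maximal such length, and ${\rm d}_{\max}(n;S)$ is the number of $S$-factorizations of $n$ of length ${\rm ord}(n;S)$. Let $d_i=a_i-e$, $B=\langle e,d_1,\dots,d_t\rangle$, $\mathcal D=(e,d_1,\dots,d_t)$. A $B^{\mathcal D}$-factorization of $b$ is $(x_0,\dots,x_t)\in\mathbb N^{t+1}$ with $x_0e+\sum x_id_i=b$, of length $\sum x_i$. The adjustment is ${\rm adj}(s)=s-{\rm ord}(s;S)e$. *)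

(* Defs.v *)
From mathcomp Require Import all_boot all_order.
Set Implicit Arguments. Unset Strict Implicit. Unset Printing Implicit Defensive.

(* A generator list is g : 'I_k -> nat.  For S = <e, a_1, ..., a_t> we use
   k = t.+1, g ord0 = e, g (i+1) = a_i. *)

Definition in_sg (k : nat) (g : 'I_k -> nat) (n : nat) : Prop :=
  exists c : 'I_k -> nat, \sum_(i < k) c i * g i = n.

(* Entries are stored in 'I_n.+1; when all g i >= 1 every factorization has
   entries <= n, so this is exactly the set of all factorizations. *)
Definition facts (k : nat) (g : 'I_k -> nat) (n : nat)
  : {set {ffun 'I_k -> 'I_n.+1}} :=
  [set c : {ffun 'I_k -> 'I_n.+1} | \sum_(i < k) (c i : nat) * g i == n].

Definition flen (k n : nat) (c : {ffun 'I_k -> 'I_n.+1}) : nat :=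
  \sum_(i < k) (c i : nat).

Definition ordS (k : nat) (g : 'I_k -> nat) (n : nat) : nat :=
  \max_(c in facts g n) flen c.

Definition dmax (k : nat) (g : 'I_k -> nat) (n : nat) : nat :=
  #|[set c in facts g n | flen c == ordS g n]|.

Definition adj (t : nat) (g : 'I_t.+1 -> nat) (s : nat) : nat :=
  s - ordS g s * g ord0.

Definition Dgens (t : nat) (g : 'I_t.+1 -> nat) : 'I_t.+1 -> nat :=
  fun i => if i == ord0 then g ord0 else g i - g ord0.

Definition countBD (t : nat) (g : 'I_t.+1 -> nat) (s : nat) : nat :=
  #|[set x in facts (Dgens g) (adj g s) | flen x <= ordS g s]|.

Definition min_gens_numsg (t : nat) (g : 'I_t.+1 -> nat) : Prop :=
  [/\ 0 < g ord0,
      (forall i j : 'I_t.+1, i < j -> g i < g j),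
      (exists N, forall n, N <= n -> in_sg g n) &
      (forall i : 'I_t.+1,
          ~ exists c : 'I_t.+1 -> nat,
              c i = 0 /\ \sum_(j < t.+1) c j * g j = g i)].

(* Main.v *)
Require Import Defs.
From mathcomp Require Import all_boot all_order.
From mathcomp Require Import zify.
Local Notation ordS := Defs.ordS.

Lemma leq_sum_term k (F : 'I_k -> nat) j : F j <= \sum_(i < k) F i.
Proof. by rewrite (bigD1 j) //= leq_addr. Qed.

Section P.
Variables (t : nat) (g : 'I_t.+1 -> nat).
Hypothesis he : 0 < g ord0.
Hypothesis hinc : forall i : 'I_t, g ord0 < g (lift ord0 i).
Local Notation e := (g ord0).

Lemma ge_e i : e <= g i.
Proof. by case: (unliftP ord0 i) => [j ->|->] //; apply: ltnW. Qed.

Lemma L_e s : ordS g s * e <= s.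
Proof.
rewrite /ordS -leq_divRL //; apply/bigmax_leqP => c; rewrite inE => /eqP hc.
rewrite leq_divRL // /flen big_distrl /=; apply: (leq_trans _ (eq_leq hc)).
by apply: leq_sum => i _; apply: leq_mul (leqnn _) (ge_e i).
Qed.

Lemma split_g (F : 'I_t.+1 -> nat) :
  \sum_(i < t.+1) F i * g i =
  (\sum_(i < t.+1) F i) * e + \sum_(j < t) F (lift ord0 j) * (g (lift ord0 j) - e).
Proof.
rewrite !big_ord_recl mulnDl big_distrl /= -addnA -big_split /=; congr (_ + _).
apply: eq_bigr => j _; rewrite -mulnDr subnKC //; exact: ltnW.
Qed.

Lemma split_D (F : 'I_t.+1 -> nat) :
  \sum_(i < t.+1) F i * Dgens g i =
  F ord0 * e + \sum_(j < t) F (lift ord0 j) * (g (lift ord0 j) - e).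
Proof.
rewrite big_ord_recl /Dgens eqxx; congr (_ + _).
Qed.

End P.

Lemma arith x0 e0 X0 D0 L0 a0 s : x0 * e0 + D0 = a0 -> L0 * e0 <= s ->
  x0 + X0 <= L0 -> a0 = s - L0 * e0 -> (L0 + x0 - X0) * e0 + (X0 * e0 + D0) = s.
Proof. nia. Qed.

Theorem proposition3p3 (t : nat) (g : 'I_t.+1 -> nat)
  (hS : min_gens_numsg g) (s : nat) (hs : in_sg g s) :
  dmax g s = countBD g s.
Proof.
case: hS => he hmon _ _.
have hinc : forall i : 'I_t, g ord0 < g (lift ord0 i) by move=> i; apply: hmon.
have hLe := @L_e t g he hinc s.
rewrite /dmax /countBD.
set L := ordS g s.
set a := adj g s.
have ha : a = s - L * g ord0 by [].
pose f (c : {ffun 'I_t.+1 -> 'I_s.+1}) : {ffun 'I_t.+1 -> 'I_a.+1} :=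
  [ffun i => if i == ord0 then ord0 else inord (c i)].
set A := [set c in facts g s | flen c == L].
set B := [set x in facts (Dgens g) a | flen x <= L].
have hAa : forall c, c \in A ->
    a = \sum_(j < t) (c (lift ord0 j) : nat) * (g (lift ord0 j) - g ord0).
  move=> c; rewrite !inE => /andP [/eqP hc /eqP hf].
  have := @split_g t g hinc (fun i => (c i : nat)); rewrite hc => hsp.
  rewrite ha {1}hsp; move: hf; rewrite /flen => ->; lia.
have Abnd : forall c, c \in A -> forall j, (c (lift ord0 j) : nat) <= a.
  move=> c hc j; rewrite (hAa c hc).
  refine (leq_trans _ (@leq_sum_term t (fun j0 : 'I_t => (c (lift ord0 j0) : nat) * (g (lift ord0 j0) - g ord0)) j)).
  by rewrite leq_pmulr // subn_gt0.
have finj : {in A &, injective f}.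
  move=> c1 c2 h1 h2 hf.
  have hl : forall j, c1 (lift ord0 j) = c2 (lift ord0 j).
    move=> j; move/ffunP/(_ (lift ord0 j)): hf; rewrite !ffunE /= => /(congr1 val).
    by rewrite /= !inordK ?ltnS ?Abnd // => /val_inj.
  apply/ffunP => i; case: (unliftP ord0 i) => [j ->|->]; first exact: hl.
  move: h1 h2; rewrite !inE => /andP [_ /eqP hf1] /andP [_ /eqP hf2].
  move: hf2; rewrite -hf1 /flen !big_ord_recl.
  rewrite (eq_bigr (fun j => (c1 (lift ord0 j) : nat))); last by move=> j _; rewrite hl.
  by move/eqP; rewrite eqn_add2r => /eqP /val_inj.
suff -> : B = f @: A by rewrite card_in_imset.
have hf0 : forall c, f c ord0 = ord0 by move=> c; rewrite ffunE.
have hfl : forall c, c \in A -> forall j, (f c (lift ord0 j) : nat) = c (lift ord0 j).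
  by move=> c hc j; rewrite ffunE /= inordK // ltnS Abnd.
apply/setP => x; apply/idP/idP; last first.
  case/imsetP => c hc ->.
  rewrite !inE; apply/andP; split.
    rewrite (@split_D t g (fun i => (f c i : nat))) hf0 mul0n add0n.
    apply/eqP; apply: eq_trans (esym (hAa c hc)); by apply: eq_bigr => j _; rewrite (hfl c hc).
  move: (hc); rewrite !inE => /andP [_ /eqP hcL].
  rewrite -hcL.
  rewrite /flen !big_ord_recl hf0 add0n.
  rewrite (eq_bigr (fun j => (c (lift ord0 j) : nat))); last by move=> j _; rewrite (hfl c hc).
  exact: leq_addl.
move=> hx; move: (hx); rewrite !inE => /andP [/eqP hxs hxl].
have hxD := etrans (esym (@split_D t g (fun i => (x i : nat)))) hxs.
move: hxD => /= hxD.
set X := \sum_(j < t) (x (lift ord0 j) : nat).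
set D := \sum_(j < t) (x (lift ord0 j) : nat) * (g (lift ord0 j) - g ord0) in hxD.
have hY : \sum_(j < t) (x (lift ord0 j) : nat) * g (lift ord0 j) = X * g ord0 + D.
  rewrite /X /D big_distrl -big_split; apply: eq_bigr => j _ /=.
  by rewrite -mulnDr subnKC // ltnW.
have hxl' : x ord0 + X <= L by move: hxl; rewrite /flen big_ord_recl.
set v0 := L + x ord0 - X.
have hv : v0 * g ord0 + \sum_(j < t) (x (lift ord0 j) : nat) * g (lift ord0 j) = s.
  rewrite hY /v0; exact: arith hxD hLe hxl' ha.
have hv0 : v0 <= s by nia.
have hxa : forall i, (x i : nat) <= s.
  move=> i; apply: leq_trans (_ : a <= s); first by rewrite -ltnS.
  by rewrite ha leq_subr.
pose c : {ffun 'I_t.+1 -> 'I_s.+1} :=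
  [ffun i => if i == ord0 then inord v0 else inord (x i)].
have hc0 : (c ord0 : nat) = v0 by rewrite ffunE /= inordK.
have hcj : forall j, (c (lift ord0 j) : nat) = x (lift ord0 j).
  by move=> j; rewrite ffunE /= inordK // ltnS.
have hcs : \sum_(i < t.+1) (c i : nat) * g i = s.
  rewrite big_ord_recl hc0; apply: eq_trans hv; congr (_ + _).
  by apply: eq_bigr => j _; rewrite hcj.
have hcl : flen c = L + x ord0.
  rewrite /flen big_ord_recl hc0 (eq_bigr (fun j => (x (lift ord0 j) : nat))).
    by rewrite -/X /v0; lia.
  by move=> j _; rewrite hcj.
have hcle : flen c <= L.
  rewrite /L /ordS; apply: (leq_bigmax_cond (F := @flen t.+1 s)).
  by rewrite inE hcs.
have x00 : (x ord0 : nat) = 0 by lia.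
apply/imsetP; exists c.
  by rewrite !inE hcs eqxx /= hcl x00 addn0.
apply/ffunP => i; rewrite ffunE; case: (unliftP ord0 i) => [j ->|->] /=;
  apply/val_inj => /=; last by rewrite x00.
by rewrite inordK hcj // ltnS -hcj.
Qed.
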